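(* Let $\phi':\mathbb{K}[x_{i|A}:i\in[n],A\subseteq[n]]\to\mathbb{K}[y_i,\beta_j:i,j\in[n]]$ be the ring homomorphism $x_{i|A}\mapsto y_i\prod_{j\in A}\beta_j$, and $I_{\phi'}=\ker\phi'$. Then $$G_L=\{x_{i|A}x_{j|B}-x_{\min(i,j)|A\cap B}\,x_{\max(i,j)|A\cup B}:\ x_{i|A},x_{j|B}\text{ incomparable in }L\}$$ is a reduced Gröbner basis of $I_{\phi'}$ with respect to the graded reverse lexicographic order $<$.
   Context: $L$ is the lattice on the variables $x_{i|A}$ ($i\in[n]$, $A\subseteq[n]$) with $x_{i|A}\le x_{j|B}$ iff $i\le j$ and $A\subseteq B$. Totally order the variables by $x_{i|A}\prec x_{j|B}$ iff $i<j$, or $i=j$ and $|A|<|B|$, or $i=j$, $|A|=|B|$ and $\min(A\setminus B)<\min(B\setminus A)$; index them $1,\dots,N=n2^n$ increasingly and write monomials as $x^u$. The graded reverse lexicographic order: $x^u<x^v$ iff $\deg x^u<\deg x^v$, or degrees are equal and the rightmost nonzero entry of $v-u$ is negative. *)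

(* Defs.v *)
From HB Require Import structures.
From mathcomp Require Import all_boot all_order all_algebra.
From mathcomp Require Import mpoly.
Set Implicit Arguments. Unset Strict Implicit. Unset Printing Implicit Defensive.
Import GRing.Theory.
Local Open Scope ring_scope.

Section Defs.
Variable n : nat.

(* Variables x_{i|A}, i in [n] (encoded as 'I_n), A subset of [n]. *)
Definition V := ('I_n * {set 'I_n})%type.

(* The enumeration is only
   a naming device; the monomial order below is defined through prec. *)
Definition NV := #|{: V}|.
Definition xv (K : fieldType) (a : V) : {mpoly K[NV]} := 'X_(enum_rank a).

Definition expo (m : 'X_{1..NV}) (a : V) : nat := m (enum_rank a).

Definition leL (a b : V) : bool := (a.1 <= b.1)%N && (a.2 \subset b.2).
Definition incomparableL (a b : V) : bool := ~~ leL a b && ~~ leL b a.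

(* minimum of a set of indices (with value n on the empty set) *)
Definition setmin (S : {set 'I_n}) : nat := \big[minn/n]_(k in S) (k : nat).

Definition prec (a b : V) : bool :=
  [|| (a.1 < b.1)%N,
      (a.1 == b.1) && (#|a.2| < #|b.2|)%N
    | [&& a.1 == b.1, #|a.2| == #|b.2|
        & (setmin (a.2 :\: b.2) < setmin (b.2 :\: a.2))%N]].

Definition grevlex_lt (u v : 'X_{1..NV}) : Prop :=
  (mdeg u < mdeg v)%N \/
  (mdeg u = mdeg v /\
   exists a : V, expo u a <> expo v a /\ (expo v a < expo u a)%N /\
     forall b : V, prec a b -> expo u b = expo v b).

Definition grevlex_le (u v : 'X_{1..NV}) : Prop := u = v \/ grevlex_lt u v.

Variable K : fieldType.

Definition is_lead_mon (p : {mpoly K[NV]}) (m : 'X_{1..NV}) : Prop :=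
  m \in msupp p /\ forall m', m' \in msupp p -> grevlex_le m' m.

Definition is_groebner_basis (G I : {mpoly K[NV]} -> Prop) : Prop :=
  (forall g, G g -> I g) /\
  (forall f, I f -> f != 0 ->
     exists g, [/\ G g, g != 0 &
       exists mf mg, [/\ is_lead_mon f mf, is_lead_mon g mg & (mg <= mf)%MM]]).

Definition is_reduced_groebner_basis (G I : {mpoly K[NV]} -> Prop) : Prop :=
  is_groebner_basis G I /\
  (forall g, G g -> exists mg, is_lead_mon g mg /\ g@_mg = 1) /\
  (forall g g', G g -> G g' -> g' <> g ->
     forall m mg', m \in msupp g -> is_lead_mon g' mg' -> ~ (mg' <= m)%MM).

Definition yv (i : 'I_n) : {mpoly K[n + n]} := 'X_(lshift n i).
Definition betav (j : 'I_n) : {mpoly K[n + n]} := 'X_(rshift n j).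

Definition phi_img (a : V) : {mpoly K[n + n]} :=
  yv a.1 * \prod_(j in a.2) betav j.

Definition phi' (p : {mpoly K[NV]}) : {mpoly K[n + n]} :=
  p \mPo [tuple phi_img (enum_val k) | k < NV].

Definition I_phi' (p : {mpoly K[NV]}) : Prop := phi' p = 0.

Definition ordmin (i j : 'I_n) : 'I_n := if (i <= j)%N then i else j.
Definition ordmax (i j : 'I_n) : 'I_n := if (i <= j)%N then j else i.

Definition G_L (p : {mpoly K[NV]}) : Prop :=
  exists a b : V, incomparableL a b /\
    p = xv K a * xv K b
        - xv K (ordmin a.1 b.1, a.2 :&: b.2) * xv K (ordmax a.1 b.1, a.2 :|: b.2).

End Defs.

(* Main.v *)
Require Import Defs.
From HB Require Import structures.
From mathcomp Require Import all_boot all_order all_algebra.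
From mathcomp Require Import mpoly.
Set Implicit Arguments. Unset Strict Implicit. Unset Printing Implicit Defensive.
Import GRing.Theory.

HB.instance Definition _ := SemiGroup.isComLaw.Build nat minn minnA minnC.

Section Comb.
Variable n : nat.
Implicit Types (S : {set 'I_n}) (a b c : V n).

Lemma setmin_le S (k : 'I_n) : k \in S -> (setmin S <= k)%N.
Proof.
move=> kS; rewrite /setmin -big_enum.
have : k \in enum S by rewrite mem_enum.
elim: (enum S) => //= x s IH; rewrite in_cons big_cons => /orP [/eqP->|/IH h].
- exact: geq_minl.
- by rewrite geq_min h orbT.
Qed.

Lemma setmin_leN S : (setmin S <= n)%N.
Proof.
rewrite /setmin; elim/big_ind: _ => //= [x y hx hy|k _]; first by rewrite geq_min hx.
exact: ltnW.
Qed.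

Lemma setmin_in S : (setmin S < n)%N -> exists2 k : 'I_n, k \in S & setmin S = k.
Proof.
rewrite /setmin.
apply: (big_ind (fun m => (m < n)%N -> exists2 k : 'I_n, k \in S & m = k)) => [|x y hx hy|k kS].
- by rewrite ltnn.
- rewrite /minn; case: ifP => _ h; [exact: hx h | exact: hy h].
- by exists k.
Qed.

Lemma setmin_gt S (x : nat) : (x < n)%N -> (forall k : 'I_n, (k <= x)%N -> k \notin S) -> (x < setmin S)%N.
Proof.
move=> xn H; case: (ltnP (setmin S) n) => [/setmin_in [k kS ek]|hn].
- rewrite ek ltnNge; apply/negP => kx; by move: (H k kx); rewrite kS.
- exact: leq_trans xn hn.
Qed.

Lemma agree_below (P Q : {set 'I_n}) (k : 'I_n) :
  (k < setmin (P :\: Q))%N -> (k < setmin (Q :\: P))%N -> (k \in P) = (k \in Q).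
Proof.
move=> h1 h2; case kP: (k \in P); case kQ: (k \in Q) => //.
- have : k \in P :\: Q by rewrite inE kP kQ.
  by move/setmin_le; rewrite leqNgt h1.
- have : k \in Q :\: P by rewrite inE kP kQ.
  by move/setmin_le; rewrite leqNgt h2.
Qed.

Lemma setmin_elem (P Q : {set 'I_n}) : (setmin (P :\: Q) < setmin (Q :\: P))%N ->
  exists2 k : 'I_n, (k \in P) && (k \notin Q) & setmin (P :\: Q) = k.
Proof.
move=> h; have := leq_trans h (setmin_leN (_ : {set 'I_n})) => /setmin_in [k kin ek].
by exists k => //; move: kin; rewrite inE andbC.
Qed.

Lemma setlt_trans (A B C : {set 'I_n}) :
  (setmin (A :\: B) < setmin (B :\: A))%N -> (setmin (B :\: C) < setmin (C :\: B))%N ->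
  (setmin (A :\: C) < setmin (C :\: A))%N.
Proof.
move=> hAB hBC.
have [kx /andP [kxA kxB] ex] := setmin_elem hAB.
have [ky /andP [kyB kyC] ey] := setmin_elem hBC.
have xn : (setmin (A :\: B) < n)%N := leq_trans hAB (setmin_leN (_ : {set 'I_n})).
have yn : (setmin (B :\: C) < n)%N := leq_trans hBC (setmin_leN (_ : {set 'I_n})).
have agAB : forall k : 'I_n, (k < setmin (A :\: B))%N -> (k \in A) = (k \in B).
  by move=> k hk; apply: agree_below => //; exact: ltn_trans hk hAB.
have agBC : forall k : 'I_n, (k < setmin (B :\: C))%N -> (k \in B) = (k \in C).
  by move=> k hk; apply: agree_below => //; exact: ltn_trans hk hBC.
case: (ltngtP (setmin (A :\: B)) (setmin (B :\: C))) => hxy.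
- have kxC : kx \notin C by rewrite -agBC // -ex.
  have kxAC : kx \in A :\: C by rewrite inE kxA kxC.
  apply: (leq_ltn_trans (setmin_le kxAC)); rewrite -ex.
  apply: setmin_gt => // k; rewrite leq_eqVlt => /orP [/eqP ek|lk].
  + have -> : k = kx by apply: val_inj; rewrite /= ek.
    by rewrite !inE kxA.
  + by rewrite inE -agBC ?(ltn_trans lk hxy) // -agAB // andNb.
- have kyA : ky \in A by rewrite agAB // -ey.
  have kyAC : ky \in A :\: C by rewrite inE kyA kyC.
  apply: (leq_ltn_trans (setmin_le kyAC)); rewrite -ey.
  apply: setmin_gt => // k; rewrite leq_eqVlt => /orP [/eqP ek|lk].
  + have -> : k = ky by apply: val_inj; rewrite /= ek.
    by rewrite !inE (negbTE kyC) andbF.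
  + by rewrite inE -agBC // -agAB ?(ltn_trans lk hxy) // andNb.
- have : kx = ky by apply: val_inj; rewrite /= -ex -ey.
  by move=> e; move: kxB; rewrite e kyB.
Qed.

Lemma prec_irr a : ~~ prec a a.
Proof. by rewrite /prec !ltnn /= !andbF. Qed.

Lemma prec_trans a b c : prec a b -> prec b c -> prec a c.
Proof.
case: a b c => i A [j B] [k C]; rewrite /prec /=.
move=> /or3P [h1|/andP[/eqP e1 h1]|/and3P[/eqP e1 /eqP c1 s1]]
        /or3P [h2|/andP[/eqP e2 h2]|/and3P[/eqP e2 /eqP c2 s2]]; apply/or3P.
- by apply: Or31; apply: ltn_trans h1 h2.
- by apply: Or31; rewrite -e2.
- by apply: Or31; rewrite -e2.
- by apply: Or31; rewrite e1.
- by apply: Or32; rewrite e1 e2 eqxx (ltn_trans h1 h2).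
- by apply: Or32; rewrite e1 e2 eqxx -c2.
- by apply: Or31; rewrite e1.
- by apply: Or32; rewrite e1 e2 eqxx c1.
- by apply: Or33; rewrite e1 e2 c1 c2 !eqxx (setlt_trans s1 s2).
Qed.

Lemma prec_asym a b : prec a b -> ~~ prec b a.
Proof. move=> h; apply/negP => h'; by move: (prec_irr a); rewrite (prec_trans h h'). Qed.

Lemma prec_total a b : a != b -> prec a b || prec b a.
Proof.
case: a b => i A [j B]; rewrite /prec /= => neq.
case: (ltngtP i j) => ij; [by [] | by rewrite ?orTb ?orbT | ].
have eij : i = j by apply: val_inj.
rewrite eij !eqxx /=.
case: (ltngtP #|A| #|B|) => AB; [by [] | by rewrite ?orTb ?orbT | ].
rewrite /=.
case: (ltngtP (setmin (A :\: B)) (setmin (B :\: A))) => h; [by [] | by rewrite ?orTb ?orbT | ].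
exfalso.
have [AB0|[k kAB]] := set_0Vmem (A :\: B).
- have [BA0|[k kBA]] := set_0Vmem (B :\: A).
  + move: neq; rewrite eij; have -> : A = B; last by rewrite eqxx.
    by apply/eqP; rewrite eqEsubset -!setD_eq0 AB0 BA0 !eqxx.
  + have := setmin_le kBA; rewrite -h => hk.
    have [k' k'in ek'] := setmin_in (leq_ltn_trans hk (ltn_ord k)).
    by rewrite AB0 inE in k'in.
- have := setmin_le kAB; rewrite h => hk.
  have [k' k'in ek'] := setmin_in (leq_ltn_trans hk (ltn_ord k)).
  have [k2 k2in ek2] := setmin_in (leq_ltn_trans (setmin_le kAB) (ltn_ord k)).
  have e : k' = k2 by apply: val_inj; rewrite /= -ek' -ek2 h.
  move: k'in k2in; rewrite e !inE => /andP [h1 _] /andP [_ h2]; by rewrite h2 in h1.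
Qed.

Lemma leL_prec a b : leL a b -> a != b -> prec a b.
Proof.
case: a b => i A [j B]; rewrite /leL /prec /= => /andP [ij AB] neq.
move: ij; rewrite leq_eqVlt => /orP [/eqP ij|->] //.
have eij : i = j by apply: val_inj.
subst j; rewrite eqxx ltnn /=.
have pAB : A \proper B.
  rewrite properEneq AB andbT; apply/eqP => eAB; by move: neq; rewrite eAB eqxx.
by rewrite (proper_card pAB).
Qed.
End Comb.

Lemma seq_max (T : eqType) (R : T -> T -> Prop) (s : seq T) :
  (forall x y z, R x y -> R y z -> R x z) ->
  (forall x y, x \in s -> y \in s -> R x y \/ R y x) ->
  s != [::] -> exists2 m, m \in s & forall y, y \in s -> R y m.
Proof.
move=> Rt; elim: s => // x s IH Rtot _.
case: s IH Rtot => [|z s] IH Rtot.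
- exists x; first by rewrite inE.
  move=> y; rewrite inE => /eqP ->; have := Rtot x x; rewrite inE eqxx => h; by case: (h isT isT).
- have [m ms hm] : exists2 m, m \in z :: s & forall y, y \in z :: s -> R y m.
    by apply: IH => // u v hu hv; apply: Rtot; rewrite inE ?hu ?hv orbT.
  have ms' : m \in [:: x, z & s] by rewrite inE ms orbT.
  have [hxm|hmx] := Rtot x m (mem_head _ _) ms'.
  + exists m; first by rewrite inE ms orbT.
    by move=> y; rewrite inE => /orP [/eqP ->|/hm].
  + exists x; first exact: mem_head.
    move=> y; rewrite inE => /orP [/eqP ->|/hm hy]; last exact: Rt hy hmx.
    by case: (Rtot x x (mem_head _ _) (mem_head _ _)).
Qed.

Section Grev.
Variable n : nat.
Local Notation VV := (V n).
Local Notation NN := (NV n).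

Lemma sum_pos (F : VV -> nat) : (0 < \sum_a F a)%N -> exists a, (0 < F a)%N.
Proof.
move=> h; case: (boolP [exists a, 0 < F a]%N) => [/existsP [a ha]|]; first by exists a.
move=> /existsPn hn; move: h; rewrite big1 // => a _; by move: (hn a); rewrite lt0n negbK => /eqP.
Qed.

Lemma term_le (F : VV -> nat) (a : VV) : (F a <= \sum_b F b)%N.
Proof. by rewrite (bigD1 a) //= leq_addr. Qed.

Lemma sum_delta (F : VV -> nat) (T : VV) : (\sum_a (a == T) * F a)%N = F T.
Proof.
rewrite (bigD1 T) //= eqxx mul1n big1 ?addn0 // => a /negbTE ->; by rewrite mul0n.
Qed.

Definition ycnt (f : VV -> nat) (i : 'I_n) := (\sum_a f a * (a.1 == i))%N.
Definition bcnt (f : VV -> nat) (j : 'I_n) := (\sum_a f a * (j \in a.2))%N.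
Definition chainf (f : VV -> nat) := forall a b, (0 < f a)%N -> (0 < f b)%N -> leL a b || leL b a.

Lemma leL_trans (a b c : VV) : leL a b -> leL b c -> leL a c.
Proof.
rewrite /leL => /andP [h1 h2] /andP [h3 h4]; rewrite (leq_trans h1 h3); exact: subset_trans h2 h4.
Qed.

Lemma leL_antisym (a b : VV) : leL a b -> leL b a -> a = b.
Proof.
case: a b => i A [j B]; rewrite /leL /= => /andP [h1 h2] /andP [h3 h4].
have -> : i = j by apply: val_inj; apply/eqP; rewrite eqn_leq h1 h3.
by have -> : A = B by apply/eqP; rewrite eqEsubset h2 h4.
Qed.

Lemma above_zero (h : VV -> nat) (T b : VV) : (forall c, (0 < h c)%N -> leL c T) -> prec T b -> h b = 0%N.
Proof.
move=> H pTb; case: (posnP (h b)) => // /H hb.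
case: (eqVneq b T) => [e|ne]; first by move: pTb; rewrite e (negbTE (prec_irr _)).
by move: (prec_asym (leL_prec hb ne)); rewrite pTb.
Qed.

Lemma decomp_sum (f f' : VV -> nat) (T : VV) (w : VV -> nat) :
  (forall a, f a = f' a + (a == T))%N ->
  (\sum_a f a * w a = \sum_a f' a * w a + w T)%N.
Proof.
move=> H; rewrite -(sum_delta w T) -big_split /=; apply: eq_bigr => a _.
by rewrite H mulnDl.
Qed.

Lemma chain_min (f g : VV -> nat) :
  (forall i, ycnt f i = ycnt g i) -> (forall j, bcnt f j = bcnt g j) -> chainf g ->
  (exists a, f a != g a) ->
  exists c, (f c < g c)%N /\ forall b, prec c b -> g b = f b.
Proof.
move: {2}(\sum_a g a)%N (erefl (\sum_a g a)%N) => k.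
elim: k f g => [|k IH] f g hs hy hb hc [a0 ha0].
- have g0 : forall a, g a = 0%N.
    move=> a; apply/eqP; move/eqP: hs; rewrite sum_nat_eq0 => /forallP /(_ a) //.
  have : (f a0 <= ycnt f a0.1)%N.
    by rewrite /ycnt; apply: leq_trans (term_le _ a0); rewrite eqxx muln1.
  rewrite hy /ycnt big1; last by move=> a _; rewrite g0.
  by rewrite leqn0 => /eqP e; move: ha0; rewrite e g0 eqxx.
- have [a1 ha1] : exists a, (0 < g a)%N by apply: sum_pos; rewrite hs.
  have [T Tin HT] := @seq_max _ (fun x y => leL x y) [seq a <- enum (@predT VV) | (0 < g a)%N]
      (@leL_trans) (fun x y hx hy => ltac:(
        move: hx hy; rewrite !mem_filter => /andP [hx _] /andP [hy _];
        by case/orP: (hc x y hx hy); [left | right]))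
      ltac:(apply/eqP => /(congr1 (fun s => a1 \in s)); by rewrite mem_filter ha1 mem_enum).
  have gT : (0 < g T)%N by move: Tin; rewrite mem_filter => /andP [].
  have HgT : forall c, (0 < g c)%N -> leL c T.
    by move=> c hc0; apply: HT; rewrite mem_filter hc0 mem_enum.
  have HfT : forall c, (0 < f c)%N -> leL c T.
    move=> c hc0; rewrite /leL; apply/andP; split.
    + have : (0 < ycnt g c.1)%N.
        rewrite -hy; apply: leq_trans hc0 _; apply: leq_trans (term_le _ c); by rewrite eqxx muln1.
      move/sum_pos => [a]; case: (eqVneq a.1 c.1) => [e|ne]; last by rewrite muln0.
      rewrite muln1 => /HgT /andP [h _]; by rewrite -e.
    + apply/subsetP => j jc.
      have : (0 < bcnt g j)%N.
        rewrite -hb; apply: leq_trans hc0 _; apply: leq_trans (term_le _ c); by rewrite jc muln1.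
      move/sum_pos => [a]; case ja: (j \in a.2); last by rewrite muln0.
      rewrite muln1 => /HgT /andP [_ h]; exact: (subsetP h).
  case: (posnP (f T)) => fT.
  + exists T; rewrite fT; split => // b pb.
    by rewrite (above_zero HgT pb) (above_zero HfT pb).
  + pose f' := fun a => (f a - (a == T))%N.
    pose g' := fun a => (g a - (a == T))%N.
    have ef : forall a, f a = (f' a + (a == T))%N.
      move=> a; rewrite /f'; case: (eqVneq a T) => [->|_]; last by rewrite subn0 addn0.
      by rewrite subnK.
    have eg : forall a, g a = (g' a + (a == T))%N.
      move=> a; rewrite /g'; case: (eqVneq a T) => [->|_]; last by rewrite subn0 addn0.
      by rewrite subnK.
    have [c [h1 h2]] : exists c, (f' c < g' c)%N /\ forall b, prec c b -> g' b = f' b.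
      apply: IH.
      * have d1 : (\sum_a (a == T) = 1)%N.
          by rewrite -[RHS](sum_delta (fun _ => 1%N) T); apply: eq_bigr => a _; rewrite muln1.
        apply/eqP; rewrite -eqSS -hs (eq_bigr _ (fun a _ => eg a)) big_split /= d1 addn1 //.
      * move=> i; have := hy i; rewrite /ycnt (decomp_sum _ ef) (decomp_sum _ eg).
        by move/addIn.
      * move=> j; have := hb j; rewrite /bcnt (decomp_sum _ ef) (decomp_sum _ eg).
        by move/addIn.
      * move=> x y hx hy'; apply: hc.
        - by apply: leq_trans hx _; rewrite /g' leq_subr.
        - by apply: leq_trans hy' _; rewrite /g' leq_subr.
      * exists a0; apply/eqP => e; move: ha0; by rewrite ef eg e eqxx.
    exists c; split; first by rewrite ef eg ltn_add2r.
    by move=> b pb; rewrite ef eg h2.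
Qed.

End Grev.

Section Grev2.
Variable n : nat.
Local Notation VV := (V n).
Local Notation NN := (NV n).
Implicit Types (u v w : 'X_{1..NN}).

Lemma expo_inj u v : (forall a, expo u a = expo v a) -> u = v.
Proof. move=> H; apply/mnmP => k; rewrite -(enum_valK k); exact: H. Qed.

Lemma mdeg_expo u : mdeg u = (\sum_(a : VV) expo u a)%N.
Proof.
rewrite mdegE (reindex (@enum_rank VV)) //; exact: onW_bij (@enum_rank_bij _).
Qed.

Lemma mdeg_ycnt u : mdeg u = (\sum_i ycnt (expo u) i)%N.
Proof.
rewrite mdeg_expo /ycnt exchange_big /=; apply: eq_bigr => a _.
rewrite -big_distrr /= (bigD1 a.1) //= eqxx big1 ?addn0 ?muln1 // => i /negbTE.
by rewrite eq_sym => ->.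
Qed.

Lemma mk_glt u v a : mdeg u = mdeg v -> (expo v a < expo u a)%N ->
  (forall b, prec a b -> expo u b = expo v b) -> grevlex_lt u v.
Proof.
move=> hd hl hb; right; split => //; exists a; split => //.
by move=> e; move: hl; rewrite e ltnn.
Qed.

Lemma glt_asym u v : grevlex_lt u v -> grevlex_lt v u -> False.
Proof.
move=> [d1|[e1 [a [n1 [l1 h1]]]]] [d2|[e2 [b [n2 [l2 h2]]]]].
- by move: (ltn_trans d1 d2); rewrite ltnn.
- by move: d1; rewrite e2 ltnn.
- by move: d2; rewrite e1 ltnn.
- case: (eqVneq a b) => [eab|nab].
  + by subst b; move: (ltn_trans l1 l2); rewrite ltnn.
  + case/orP: (prec_total nab) => [/h1 e|/h2 e]; [exact: n2 (esym e) | exact: n1 (esym e)].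
Qed.

Lemma glt_trans u v w : grevlex_lt u v -> grevlex_lt v w -> grevlex_lt u w.
Proof.
move=> [d1|[e1 [a [n1 [l1 h1]]]]] [d2|[e2 [b [n2 [l2 h2]]]]].
- by left; exact: ltn_trans d1 d2.
- by left; rewrite -e2.
- by left; rewrite e1.
- have ed : mdeg u = mdeg w by rewrite e1 e2.
  case: (eqVneq a b) => [eab|nab].
  + subst b; apply: (mk_glt ed (ltn_trans l2 l1)) => c pc; by rewrite h1 // h2.
  + case/orP: (prec_total nab) => pab.
    * apply: (mk_glt (a := b) ed); first by rewrite h1.
      move=> c pc; rewrite h1 ?h2 //; exact: prec_trans pab pc.
    * apply: (mk_glt (a := a) ed); first by rewrite -h2.
      move=> c pc; rewrite h1 ?h2 //; exact: prec_trans pab pc.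
Qed.

Lemma glt_total u v : u != v -> grevlex_lt u v \/ grevlex_lt v u.
Proof.
move=> neq; case: (ltngtP (mdeg u) (mdeg v)) => hd; [by left; left | by right; left |].
pose s := [seq a <- enum (@predT VV) | expo u a != expo v a].
have sne : s != [::].
  apply/eqP => s0; move: neq; rewrite (@expo_inj u v) ?eqxx // => a.
  apply/eqP; apply: contraT => hne.
  have : a \in s by rewrite mem_filter hne mem_enum.
  by rewrite s0.
have Rt : forall x y z : VV, x = y \/ prec x y -> y = z \/ prec y z -> x = z \/ prec x z.
  move=> x y z [->|h1] [<-|h2]; [by left | by right | by right | right; exact: prec_trans h1 h2].
have Rtot : forall x y : VV, x \in s -> y \in s -> (x = y \/ prec x y) \/ (y = x \/ prec y x).
  move=> x y _ _; case: (eqVneq x y) => [->|nxy]; first by left; left.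
  by case/orP: (prec_total nxy) => h; [left; right | right; right].
have [c cs Hc] := @seq_max _ (fun x y => x = y \/ prec x y) s Rt Rtot sne.
have above : forall b, prec c b -> expo u b = expo v b.
  move=> b pb; apply/eqP; apply: contraT => hb.
  have : b \in s by rewrite mem_filter hb mem_enum.
  move/Hc => [e|pbc]; first by move: pb; rewrite e (negbTE (prec_irr _)).
  by move: (prec_asym pbc); rewrite pb.
have ne : expo u c != expo v c by move: cs; rewrite mem_filter => /andP [].
case: (ltngtP (expo u c) (expo v c)) => hc.
- right; apply: (mk_glt (esym hd) hc) => b pb; by rewrite above.
- left; exact: (mk_glt hd hc).
- by move: ne; rewrite hc eqxx.
Qed.

Lemma gle_trans u v w : grevlex_le u v -> grevlex_le v w -> grevlex_le u w.
Proof.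
move=> [->|h1] [<-|h2]; [by left | by right | by right | right; exact: glt_trans h1 h2].
Qed.

Lemma gle_total u v : grevlex_le u v \/ grevlex_le v u.
Proof.
case: (eqVneq u v) => [->|nuv]; first by left; left.
by case: (glt_total nuv) => h; [left; right | right; right].
Qed.

Variable K : fieldType.

Lemma lead_exists (p : {mpoly K[NN]}) : p != 0%R -> exists m, is_lead_mon p m.
Proof.
move=> p0.
have sne : msupp p != [::] by rewrite msupp_eq0.
have [m ms hm] := @seq_max _ (@grevlex_le n) (msupp p) (@gle_trans) (fun x y _ _ => gle_total x y) sne.
by exists m; split.
Qed.

Lemma lead_uniq (p : {mpoly K[NN]}) m1 m2 : is_lead_mon p m1 -> is_lead_mon p m2 -> m1 = m2.
Proof.
move=> [i1 h1] [i2 h2]; case: (h2 _ i1) => // l1; case: (h1 _ i2) => // l2.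
by case: (glt_asym l1 l2).
Qed.

End Grev2.

Section Poly.
Variable n : nat.
Variable K : fieldType.
Local Notation VV := (V n).
Local Notation NN := (NV n).
Local Open Scope ring_scope.

Definition emon (a : VV) : 'X_{1..n+n} :=
  (U_(lshift n a.1) + \big[+%MM/0%MM]_(j in a.2) U_(rshift n j))%MM.

Lemma phi_img_X (a : VV) : phi_img K a = 'X_[emon a].
Proof.
rewrite /phi_img /emon mpolyXD /yv /betav.
congr (_ * _); rewrite (big_morph (fun m => 'X_[m] : {mpoly K[n+n]}) (@mpolyXD _ _) (@mpolyX0 _ _)).
done.
Qed.

Definition mu (m : 'X_{1..NN}) : 'X_{1..n+n} :=
  [multinom (match split k with inl i => ycnt (expo m) i | inr j => bcnt (expo m) j end) | k < n + n].

Lemma mu_l m i : mu m (lshift n i) = ycnt (expo m) i.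
Proof. by rewrite mnmE (unsplitK (inl i)). Qed.

Lemma mu_r m j : mu m (rshift n j) = bcnt (expo m) j.
Proof. by rewrite mnmE (unsplitK (inr j)). Qed.

Lemma emon_l (a : VV) i : emon a (lshift n i) = (a.1 == i) :> nat.
Proof.
rewrite /emon mnmDE mnm1E eq_lshift mnm_sumE big1 ?addn0 // => j _.
by rewrite mnm1E eq_rlshift.
Qed.

Lemma emon_r (a : VV) j : emon a (rshift n j) = (j \in a.2) :> nat.
Proof.
rewrite /emon mnmDE mnm1E eq_lrshift add0n mnm_sumE.
case: (boolP (j \in a.2)) => ja.
- rewrite (bigD1 j) //= mnm1E eqxx big1 // => k /andP [_ kj]; by rewrite mnm1E eq_rshift (negbTE kj).
- rewrite big1 // => k ka; rewrite mnm1E eq_rshift; apply/eqP; rewrite eqb0; apply/eqP => e.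
  by move: ja; rewrite -e ka.
Qed.

Lemma phi'X (m : 'X_{1..NN}) : phi' ('X_[m] : {mpoly K[NN]}) = 'X_[mu m].
Proof.
rewrite /phi' comp_mpolyX.
under eq_bigr do rewrite tnth_mktuple phi_img_X mpolyXn.
rewrite -(big_morph (fun m => 'X_[m] : {mpoly K[n+n]}) (@mpolyXD _ _) (@mpolyX0 _ _)).
congr 'X_[_]; apply/mnmP => k.
rewrite mnm_sumE (reindex (@enum_rank VV)); last exact: onW_bij (@enum_rank_bij _).
rewrite -(splitK k); case: (split k) => [i|j] /=.
- rewrite mu_l /ycnt; apply: eq_bigr => a _; by rewrite mulmnE enum_rankK emon_l mulnC.
- rewrite mu_r /bcnt; apply: eq_bigr => a _; by rewrite mulmnE enum_rankK emon_r mulnC.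
Qed.

Lemma phi'E (f : {mpoly K[NN]}) : phi' f = \sum_(m <- msupp f) f@_m *: 'X_[mu m].
Proof. rewrite /phi' comp_mpolyEX; apply: eq_bigr => m _; by rewrite -phi'X. Qed.

Lemma fibre (f : {mpoly K[NN]}) mf : I_phi' f -> mf \in msupp f ->
  exists2 v, v \in msupp f & v != mf /\ mu v = mu mf.
Proof.
move=> If mfin.
case: (boolP (has (fun m => (m != mf) && (mu m == mu mf)) (msupp f))).
- by move/hasP => [v vin /andP [nv /eqP ev]]; exists v.
- move/hasPn => hn; exfalso.
  have : (phi' f)@_(mu mf) = f@_mf.
    rewrite phi'E raddf_sum /= (bigD1_seq mf) //= ?msupp_uniq // mcoeffZ mcoeffX eqxx mulr1.
    rewrite big1_seq ?addr0 // => m /andP [nm min]; rewrite mcoeffZ mcoeffX.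
    by move: (hn m min); rewrite nm /= => /negbTE ->; rewrite mulr0.
  rewrite If mcoeff0 => /esym /eqP e; by move: mfin; rewrite mcoeff_msupp e.
Qed.

End Poly.

From mathcomp Require Import ring.

Section GL.
Variable n : nat.
Variable K : fieldType.
Local Notation VV := (V n).
Local Notation NN := (NV n).
Local Open Scope ring_scope.

Definition mm (a b : VV) : 'X_{1..NN} := (U_(enum_rank a) + U_(enum_rank b))%MM.

Lemma xv_mul (a b : VV) : xv K a * xv K b = 'X_[mm a b].
Proof. by rewrite /xv /mm mpolyXD. Qed.

Lemma expo_mm (a b c : VV) : expo (mm a b) c = ((a == c) + (b == c))%N.
Proof. by rewrite /expo /mm mnmDE !mnm1E !(inj_eq (@enum_rank_inj _)). Qed.

Lemma mdeg_mm (a b : VV) : mdeg (mm a b) = 2%N.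
Proof. by rewrite /mm mdegD !mdeg1. Qed.

Definition lo (a b : VV) : VV := (ordmin a.1 b.1, a.2 :&: b.2).
Definition hi (a b : VV) : VV := (ordmax a.1 b.1, a.2 :|: b.2).

Definition Gp (a b : VV) : {mpoly K[NN]} :=
  xv K a * xv K b - xv K (lo a b) * xv K (hi a b).

Lemma ordmin_l (i j : 'I_n) : (ordmin i j <= i)%N.
Proof. rewrite /ordmin; case: (leqP i j) => h //; exact: ltnW h. Qed.
Lemma ordmin_r (i j : 'I_n) : (ordmin i j <= j)%N.
Proof. rewrite /ordmin; case: (leqP i j) => h //; exact: ltnW h. Qed.
Lemma ordmax_l (i j : 'I_n) : (i <= ordmax i j)%N.
Proof. rewrite /ordmax; case: (leqP i j) => h //; exact: ltnW h. Qed.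
Lemma ordmax_r (i j : 'I_n) : (j <= ordmax i j)%N.
Proof. rewrite /ordmax; case: (leqP i j) => h //; exact: ltnW h. Qed.

Lemma ordmin_sym (i j : 'I_n) : ordmin i j = ordmin j i.
Proof.
rewrite /ordmin; case: (ltngtP i j) => h.
- by [].
- by [].
- by have -> : i = j by apply: val_inj.
Qed.
Lemma ordmax_sym (i j : 'I_n) : ordmax i j = ordmax j i.
Proof.
rewrite /ordmax; case: (ltngtP i j) => h.
- by [].
- by [].
- by have -> : i = j by apply: val_inj.
Qed.

Lemma Gp_sym (a b : VV) : Gp b a = Gp a b.
Proof. by rewrite /Gp /lo /hi mulrC ordmin_sym ordmax_sym setIC setUC. Qed.

Lemma leL_lo_l (a b : VV) : leL (lo a b) a.
Proof. by rewrite /leL ordmin_l subsetIl. Qed.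
Lemma leL_lo_r (a b : VV) : leL (lo a b) b.
Proof. by rewrite /leL ordmin_r subsetIr. Qed.
Lemma leL_hi_l (a b : VV) : leL a (hi a b).
Proof. by rewrite /leL ordmax_l subsetUl. Qed.
Lemma leL_hi_r (a b : VV) : leL b (hi a b).
Proof. by rewrite /leL ordmax_r subsetUr. Qed.

Lemma leL_refl (a : VV) : leL a a.
Proof. by rewrite /leL leqnn subxx. Qed.

Section Inc.
Variables a b : VV.
Hypothesis inc : incomparableL a b.

Lemma inc_neq : a != b.
Proof. apply/eqP => e; move: inc; by rewrite /incomparableL e leL_refl. Qed.

Lemma hi_neq_a : hi a b != a.
Proof. apply/eqP => e; move: inc (leL_hi_r a b); rewrite e /incomparableL => /andP [_ /negbTE ->]. done. Qed.
Lemma hi_neq_b : hi a b != b.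
Proof. apply/eqP => e; move: inc (leL_hi_l a b); rewrite e /incomparableL => /andP [/negbTE -> _]. done. Qed.
Lemma lo_neq_hi : lo a b != hi a b.
Proof.
apply/eqP => e; have h1 := leL_lo_l a b; have h2 := leL_hi_l a b.
rewrite -e in h2; move: hi_neq_a; by rewrite -e (leL_antisym h1 h2) eqxx.
Qed.

Lemma prec_a_hi : prec a (hi a b).
Proof. apply: leL_prec (leL_hi_l a b) _; by rewrite eq_sym hi_neq_a. Qed.
Lemma prec_b_hi : prec b (hi a b).
Proof. apply: leL_prec (leL_hi_r a b) _; by rewrite eq_sym hi_neq_b. Qed.
Lemma prec_lo_hi : prec (lo a b) (hi a b).
Proof. apply: leL_prec _ lo_neq_hi; exact: leL_trans (leL_lo_l a b) (leL_hi_l a b). Qed.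

Lemma expo_ab_hi : expo (mm a b) (hi a b) = 0%N.
Proof. by rewrite expo_mm eq_sym (negbTE hi_neq_a) eq_sym (negbTE hi_neq_b). Qed.
Lemma expo_lohi_hi : expo (mm (lo a b) (hi a b)) (hi a b) = 1%N.
Proof. by rewrite expo_mm (negbTE lo_neq_hi) eqxx. Qed.

Lemma mm_neq : mm a b != mm (lo a b) (hi a b).
Proof. apply/eqP => e; move: expo_ab_hi; by rewrite e expo_lohi_hi. Qed.

Lemma Gp_X : Gp a b = 'X_[mm a b] - 'X_[mm (lo a b) (hi a b)].
Proof. by rewrite /Gp !xv_mul. Qed.

Lemma Gp_coef m : (Gp a b)@_m = (mm a b == m)%:R - (mm (lo a b) (hi a b) == m)%:R.
Proof. by rewrite Gp_X mcoeffB !mcoeffX. Qed.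

Lemma Gp_lead_coef : (Gp a b)@_(mm a b) = 1.
Proof. by rewrite Gp_coef eqxx eq_sym (negbTE mm_neq) subr0. Qed.

Lemma Gp_supp m : m \in msupp (Gp a b) -> m = mm a b \/ m = mm (lo a b) (hi a b).
Proof.
rewrite mcoeff_msupp Gp_coef.
case: (eqVneq (mm a b) m) => [->|_]; first by left.
case: (eqVneq (mm (lo a b) (hi a b)) m) => [->|_]; first by right.
by rewrite subrr eqxx.
Qed.

Lemma Gp_glt : grevlex_lt (mm (lo a b) (hi a b)) (mm a b).
Proof.
apply: (mk_glt (a := hi a b)); first by rewrite !mdeg_mm.
  by rewrite expo_ab_hi expo_lohi_hi.
move=> c pc; rewrite !expo_mm.
have nc : forall x, prec x (hi a b) -> (x == c) = false.
  move=> x px; apply/eqP => e; move: (prec_asym px); by rewrite e pc.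
rewrite (nc _ prec_a_hi) (nc _ prec_b_hi) (nc _ prec_lo_hi).
suff -> : (hi a b == c) = false by [].
apply/eqP => e; move: pc; by rewrite -e (negbTE (prec_irr _)).
Qed.

Lemma Gp_lead : is_lead_mon (Gp a b) (mm a b).
Proof.
split; first by rewrite mcoeff_msupp Gp_lead_coef oner_neq0.
move=> m' /Gp_supp [->|->]; [by left | right; exact: Gp_glt].
Qed.

Lemma Gp_neq0 : Gp a b != 0.
Proof. apply/eqP => e; move: Gp_lead_coef; rewrite e mcoeff0 => /eqP; by rewrite eq_sym oner_eq0. Qed.

End Inc.

Lemma pair_sub (c d x y : VV) : c != d -> (mm c d <= mm x y)%MM ->
  (x = c /\ y = d) \/ (x = d /\ y = c).
Proof.
move=> ncd /mnm_lepP H.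
have hc := H (enum_rank c); have hd := H (enum_rank d).
rewrite -/(expo _ c) -/(expo _ c) in hc; rewrite -/(expo _ d) -/(expo _ d) in hd.
rewrite !expo_mm eqxx (eq_sym d) (negbTE ncd) in hc.
rewrite !expo_mm eqxx (negbTE ncd) in hd.
have hc' : (x == c) || (y == c) by move: hc; case: (x == c); case: (y == c).
have hd' : (x == d) || (y == d) by move: hd; case: (x == d); case: (y == d).
case/orP: hc' => /eqP e1; case/orP: hd' => /eqP e2.
- by move: ncd; rewrite -e1 -e2 eqxx.
- by left.
- by right.
- by move: ncd; rewrite -e1 -e2 eqxx.
Qed.

End GL.

Section Main.
Variable n : nat.
Variable K : fieldType.
Local Notation VV := (V n).
Local Notation NN := (NV n).
Local Open Scope ring_scope.

Lemma phi'_xv (a : VV) : phi' (xv K a) = phi_img K a.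
Proof.
by rewrite /phi' /xv comp_mpolyXU -(tnth_nth 0) tnth_mktuple enum_rankK.
Qed.

Lemma phi'_Gp (a b : VV) : phi' (Gp K a b) = 0.
Proof.
rewrite /Gp /phi' rmorphB !rmorphM /=.
rewrite -!/(phi' _) !phi'_xv /phi_img /lo /hi /=.
set i := a.1; set j := b.1; set A := a.2; set B := b.2.
have ey : yv K (ordmin i j) * yv K (ordmax i j) = yv K i * yv K j.
  rewrite /ordmin /ordmax; case: ifP => _ //; exact: mulrC.
apply/eqP; rewrite subr_eq0; apply/eqP.
rewrite (@big_setID _ _ _ _ B A) [X in _ = _ * (_ * X)](@big_setID _ _ _ _ (A :|: B) A) setUK setIC.
rewrite setDUl setDv set0U.
set X := \prod_(k in A :&: B) _; set D := \prod_(k in B :\: A) _; set PA := \prod_(k in A) _.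
rewrite /=.
transitivity ((yv K i * yv K j) * (X * (PA * D))); first by ring.
rewrite -ey; ring.
Qed.

End Main.

Theorem theorem3p4 (n : nat) (K : fieldType) :
  is_reduced_groebner_basis (@G_L n K) (@I_phi' n K).
Proof.
split; [split|split].
- move=> g [a [b [inc ep]]]; rewrite /I_phi' ep; exact: (phi'_Gp K a b).
- move=> f If f0; have [mf lf] := lead_exists f0.
  case: (boolP [exists a : V n, exists b : V n,
                  [&& (0 < expo mf a)%N, (0 < expo mf b)%N & incomparableL a b]]).
  + move/existsP => [a /existsP [b /and3P [ha hb inc]]].
    exists (Gp K a b); split.
    * by exists a, b.
    * exact: (Gp_neq0 K inc).
    * exists mf, (mm a b); split => //; first exact: (Gp_lead K inc).
      apply/mnm_lepP => k; rewrite -[k](enum_valK k).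
      change (expo (mm a b) (enum_val k) <= expo mf (enum_val k))%N.
      rewrite expo_mm; set c := enum_val k.
      case: (eqVneq a c) => [eac|nac]; case: (eqVneq b c) => [ebc|nbc] //=.
      - by move: (inc_neq inc); rewrite eac ebc eqxx.
      - by rewrite -eac.
      - by rewrite -ebc.
  + move=> hn; exfalso.
    have hch : chainf (expo mf).
      move=> a b ha hb; apply: contraNT hn => h; apply/existsP; exists a; apply/existsP; exists b.
      by rewrite ha hb /incomparableL -negb_or.
    have [mfin hl] := lf.
    have [v vin [nv ev]] := fibre If mfin.
    have hy : forall i, ycnt (expo v) i = ycnt (expo mf) i by move=> i; rewrite -!mu_l ev.
    have hb : forall j, bcnt (expo v) j = bcnt (expo mf) j by move=> j; rewrite -!mu_r ev.
    have ex : exists a, expo v a != expo mf a.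
      case: (boolP [exists a, expo v a != expo mf a]) => [/existsP [a ha]|/existsPn H]; first by exists a.
      by move: nv; rewrite (@expo_inj _ v mf) ?eqxx // => a; apply/eqP; move: (H a); rewrite negbK.
    have [c [h1 h2]] := chain_min hy hb hch ex.
    have glt1 : grevlex_lt mf v.
      apply: (mk_glt (a := c)) => //.
      by rewrite !mdeg_ycnt; apply: eq_bigr => i _; rewrite hy.
    case: (hl v vin) => [e|l]; [by move: nv; rewrite e eqxx | exact: glt_asym l glt1].
- move=> g [a [b [inc ep]]]; exists (mm a b); rewrite ep; split; [exact: (Gp_lead K inc) | exact: (Gp_lead_coef K inc)].
- move=> g g' [a [b [inc ep]]] [c [d [inc' ep']]] ng m mg' min lead'.
  have eg : g = Gp K a b := ep.
  have eg' : g' = Gp K c d := ep'.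
  rewrite eg in min; rewrite eg' in lead'.
  rewrite (lead_uniq lead' (Gp_lead K inc')) => hle.
  case: (Gp_supp min) => em; rewrite em in hle;
    case: (pair_sub (inc_neq inc') hle) => [[e1 e2]|[e1 e2]].
  + by apply: ng; rewrite eg eg' -e1 -e2.
  + by apply: ng; rewrite eg eg' -e1 -e2 (Gp_sym K).
  + move: inc'; rewrite /incomparableL -e1 -e2 (leL_trans (leL_lo_l a b) (leL_hi_l a b)).
    done.
  + move: inc'; rewrite /incomparableL -e1 -e2 (leL_trans (leL_lo_l a b) (leL_hi_l a b)) andbF.
    done.
Qed.
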